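(* Let $k\geqslant 2$ and $m_1,\ldots,m_k\geqslant 4$. Write $S^{m_i}=\{(\mathbf{x}_i,q_i):\mathbf{x}_i\in\mathbb{R}^{m_i-3},\ q_i\in\mathbb{H},\ |\mathbf{x}_i|^2+|q_i|^2=1\}$. Let the quaternionic torus $\mathrm{Sp}(1)^{k-1}$ act on $S^{m_1}\times\cdots\times S^{m_k}$ by \[ (r_1,\ldots,r_{k-1})\cdot((\mathbf{x}_1,q_1),\ldots,(\mathbf{x}_k,q_k))=((\mathbf{x}_1,q_1r_1^{-1}),(\mathbf{x}_2,r_1q_2r_2^{-1}),\ldots,(\mathbf{x}_{k-1},r_{k-2}q_{k-1}r_{k-1}^{-1}),(\mathbf{x}_k,r_{k-1}q_k)). \] Then the orbit space $(S^{m_1}\times\cdots\times S^{m_k})/\mathrm{Sp}(1)^{k-1}$ is homeomorphic to the sphere $S^m$, $m=m_1+\cdots+m_k-3(k-1)$, and the canonical projection onto the orbit space is given by \[ ((\mathbf{x}_1,q_1),\ldots,(\mathbf{x}_k,q_k))\mapsto\frac{(\mathbf{x}_1,\ldots,\mathbf{x}_k,q_1q_2\cdots q_k)}{\sqrt{|\mathbf{x}_1|^2+\cdots+|\mathbf{x}_k|^2+|q_1q_2\cdots q_k|^2}}\in S^m\subset\mathbb{R}^{m_1-3}\times\cdots\times\mathbb{R}^{m_k-3}\times\mathbb{H}. \]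
   Context: $\mathbb{H}$ is the algebra of quaternions with its Euclidean norm; $\mathrm{Sp}(1)$ is the group of unit quaternions. *)

(* Defs.v *)
From mathcomp Require Import all_boot all_order all_algebra.
From mathcomp Require Import reals.
Set Implicit Arguments. Unset Strict Implicit. Unset Printing Implicit Defensive.
Import Order.TTheory GRing.Theory Num.Theory.
Local Open Scope ring_scope.

Section Quat.
Variable R : realType.

Record quat := Quat { qre : R; qi : R; qj : R; qk : R }.

Definition qone : quat := Quat 1 0 0 0.

Definition qmul (p q : quat) : quat :=
  Quat (qre p * qre q - qi p * qi q - qj p * qj q - qk p * qk q)
       (qre p * qi q + qi p * qre q + qj p * qk q - qk p * qj q)
       (qre p * qj q - qi p * qk q + qj p * qre q + qk p * qi q)
       (qre p * qk q + qi p * qj q - qj p * qi q + qk p * qre q).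

Definition qconj (q : quat) : quat := Quat (qre q) (- qi q) (- qj q) (- qk q).

Definition qscale (c : R) (q : quat) : quat :=
  Quat (c * qre q) (c * qi q) (c * qj q) (c * qk q).

Definition qsub (p q : quat) : quat :=
  Quat (qre p - qre q) (qi p - qi q) (qj p - qj q) (qk p - qk q).

Definition qnorm2 (q : quat) : R :=
  qre q ^+ 2 + qi q ^+ 2 + qj q ^+ 2 + qk q ^+ 2.

Definition qinv (q : quat) : quat := qscale (qnorm2 q)^-1 (qconj q).

Definition vnorm2 n (v : 'rV[R]_n) : R := \sum_(j < n) v 0 j ^+ 2.

Variables (k : nat) (m : 'I_k -> nat).

Definition dpt := forall i : 'I_k, 'rV[R]_(m i - 3) * quat.

Definition in_dom (a : dpt) : Prop :=
  forall i, vnorm2 (a i).1 + qnorm2 (a i).2 = 1.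

Definition tpt := ((forall i : 'I_k, 'rV[R]_(m i - 3)) * quat)%type.

Definition in_tgt (y : tpt) : Prop :=
  \sum_(i < k) vnorm2 (y.1 i) + qnorm2 y.2 = 1.

(* element (r_1,...,r_{k-1}) of Sp(1)^{k-1}, indexed 0..k-2; out of range = 1 *)
Definition rget (r : 'I_k.-1 -> quat) (j : nat) : quat :=
  match @insub nat (fun j => j < k.-1)%N _ j with Some o => r o | None => qone end.

Definition unit_tuple (r : 'I_k.-1 -> quat) : Prop := forall j, qnorm2 (r j) = 1.

(* i-th component (0-indexed): q_i |-> r_{i-1} q_i r_i^{-1}, with r_{-1} = r_{k-1} = 1 *)
Definition act (r : 'I_k.-1 -> quat) (a : dpt) : dpt :=
  fun i => ((a i).1,
            qmul (qmul (if (i : nat) == 0%N then qone else rget r (i.-1)) (a i).2)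
                 (qinv (rget r i))).

Definition same_orbit (a b : dpt) : Prop :=
  exists r, unit_tuple r /\ forall i, b i = act r a i.

Definition qprod (a : dpt) : quat := \big[qmul/qone]_(i < k) (a i).2.

Definition proj (a : dpt) : tpt :=
  let s := Num.sqrt (\sum_(i < k) vnorm2 (a i).1 + qnorm2 (qprod a)) in
  (fun i => s^-1 *: (a i).1, qscale s^-1 (qprod a)).

Definition ddist2 (a b : dpt) : R :=
  \sum_(i < k) (vnorm2 ((a i).1 - (b i).1) + qnorm2 (qsub (a i).2 (b i).2)).

Definition tdist2 (y z : tpt) : R :=
  \sum_(i < k) vnorm2 (y.1 i - z.1 i) + qnorm2 (qsub y.2 z.2).

End Quat.

Definition openin (R : realType) (T : Type) (S : T -> Prop) (d2 : T -> T -> R)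
  (U : T -> Prop) : Prop :=
  forall x, S x -> U x -> exists e : R, 0 < e /\ forall y, S y -> d2 x y < e -> U y.

(* Main.v *)
Require Import Defs.
From HB Require Import structures.
From mathcomp Require Import all_boot all_order all_algebra.
From mathcomp Require Import reals.
From mathcomp Require Import zify ring lra.
From mathcomp Require all_classical all_reals all_analysis.
From Stdlib Require Import IndefiniteDescription Classical FunctionalExtensionality.
Import Order.TTheory GRing.Theory Num.Theory.
Local Open Scope ring_scope.
Set Implicit Arguments. Unset Strict Implicit. Unset Printing Implicit Defensive.

Lemma quatE (R : realType) (p q : quat R) :
  qre p = qre q -> qi p = qi q -> qj p = qj q -> qk p = qk q -> p = q.
Proof. by case: p => a b c d; case: q => a' b' c' d' /= -> -> -> ->. Qed.

Lemma qmulA (R : realType) : associative (@qmul R).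
Proof. move=> p q r; apply: quatE => /=; ring. Qed.
Lemma qmul1q (R : realType) : left_id (@qone R) (@qmul R).
Proof. move=> p; apply: quatE => /=; ring. Qed.
Lemma qmulq1 (R : realType) : right_id (@qone R) (@qmul R).
Proof. move=> p; apply: quatE => /=; ring. Qed.

HB.instance Definition _ (R : realType) :=
  Monoid.isLaw.Build (quat R) (@qone R) (@qmul R) (@qmulA R) (@qmul1q R) (@qmulq1 R).

Section Q.
Variable R : realType.
Local Notation quat := (quat R).
Local Notation qmul := (@qmul R).
Local Notation qone := (@qone R).

Definition qreal (c : R) : quat := Quat c 0 0 0.
Definition qzero : quat := qreal 0.

Lemma qnorm2M (p q : quat) : qnorm2 (qmul p q) = qnorm2 p * qnorm2 q.
Proof. rewrite /qnorm2 /=; ring. Qed.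

Lemma qnorm2_ge0 (q : quat) : 0 <= qnorm2 q.
Proof. by rewrite /qnorm2 !addr_ge0 // sqr_ge0. Qed.

Lemma qnorm2_eq0 (q : quat) : qnorm2 q = 0 -> q = qzero.
Proof.
case: q => a b c d; rewrite /qnorm2 /= => H.
have ha : a ^+ 2 = 0 by nra.
have hb : b ^+ 2 = 0 by nra.
have hc : c ^+ 2 = 0 by nra.
have hd : d ^+ 2 = 0 by nra.
move/eqP: ha; move/eqP: hb; move/eqP: hc; move/eqP: hd; rewrite !expf_eq0 /=.
by move=> /eqP -> /eqP -> /eqP -> /eqP ->.
Qed.

Lemma qnorm2_zero : qnorm2 qzero = 0.
Proof. rewrite /qnorm2 /=; ring. Qed.
Lemma qnorm2_one : qnorm2 qone = 1.
Proof. rewrite /qnorm2 /=; ring. Qed.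

Lemma qmul0q (q : quat) : qmul qzero q = qzero.
Proof. apply: quatE => /=; ring. Qed.
Lemma qmulq0 (q : quat) : qmul q qzero = qzero.
Proof. apply: quatE => /=; ring. Qed.

Lemma qnorm2Z c (q : quat) : qnorm2 (qscale c q) = c ^+ 2 * qnorm2 q.
Proof. rewrite /qnorm2 /=; ring. Qed.

Lemma qnorm2_inv (q : quat) : qnorm2 (qinv q) = (qnorm2 q)^-1.
Proof.
rewrite /qinv qnorm2Z.
have -> : qnorm2 (qconj q) = qnorm2 q by rewrite /qnorm2 /=; ring.
have [->|nz] := eqVneq (qnorm2 q) 0; first by rewrite invr0 mulr0.
by rewrite expr2 -mulrA mulVf // mulr1.
Qed.

Lemma qmulV (q : quat) : qnorm2 q != 0 -> qmul q (qinv q) = qone.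
Proof.
move=> nz; rewrite /qinv; set c := (qnorm2 q)^-1.
have e : c * qnorm2 q = 1 by rewrite mulVf.
apply: quatE => /=; move: e; rewrite /qnorm2 => e; nra.
Qed.

Lemma qmulVq (q : quat) : qnorm2 q != 0 -> qmul (qinv q) q = qone.
Proof.
move=> nz; rewrite /qinv; set c := (qnorm2 q)^-1.
have e : c * qnorm2 q = 1 by rewrite mulVf.
apply: quatE => /=; move: e; rewrite /qnorm2 => e; nra.
Qed.

Lemma qinv_one : qinv qone = qone.
Proof. rewrite /qinv qnorm2_one invr1; apply: quatE => /=; ring. Qed.

Lemma qinvM (p q : quat) : qinv (qmul p q) = qmul (qinv q) (qinv p).
Proof.
rewrite /qinv qnorm2M invfM.
apply: quatE => /=; ring.
Qed.

Lemma qinvK (q : quat) : qinv (qinv q) = q.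
Proof.
have [z|nz] := eqVneq (qnorm2 q) 0.
  rewrite (qnorm2_eq0 z) /qinv qnorm2Z /qnorm2 /=.
  apply: quatE => /=; ring.
have e := qnorm2_inv q.
rewrite {1}/qinv e invrK /qinv.
apply: quatE => /=; field; rewrite nz //.
Qed.

Lemma qmul_realL c (q : quat) : qmul (qreal c) q = qscale c q.
Proof. apply: quatE => /=; ring. Qed.
Lemma qmul_realR c (q : quat) : qmul q (qreal c) = qscale c q.
Proof. apply: quatE => /=; ring. Qed.
Lemma qreal_mul a b : qmul (qreal a) (qreal b) = qreal (a * b).
Proof. apply: quatE => /=; ring. Qed.
Lemma qscaleA a b (q : quat) : qscale a (qscale b q) = qscale (a * b) q.
Proof. apply: quatE => /=; ring. Qed.
Lemma qscale1 (q : quat) : qscale 1 q = q.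
Proof. apply: quatE => /=; ring. Qed.
Lemma qscale_mulr c (p q : quat) : qmul p (qscale c q) = qscale c (qmul p q).
Proof. apply: quatE => /=; ring. Qed.
Lemma qnorm2_real c : qnorm2 (qreal c) = c ^+ 2.
Proof. rewrite /qnorm2 /=; ring. Qed.

Lemma qnorm2_prod n (f : 'I_n -> quat) :
  qnorm2 (\big[qmul/qone]_(i < n) f i) = \prod_(i < n) qnorm2 (f i).
Proof.
apply: (big_morph (fun q => qnorm2 q)); first exact: qnorm2M.
exact: qnorm2_one.
Qed.

Lemma qreal_prod n (f : 'I_n -> R) :
  qreal (\prod_(i < n) f i) = \big[qmul/qone]_(i < n) qreal (f i).
Proof.
apply: (big_morph qreal); first by move=> a b; rewrite qreal_mul.
done.
Qed.

End Q.


Section V.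
Variable R : realType.
Local Notation quat := (quat R).
Local Notation qmul := (@qmul R).
Local Notation qone := (@qone R).

Definition vdot n (u v : 'rV[R]_n) : R := \sum_(j < n) u 0 j * v 0 j.
Definition qdot (p q : quat) : R := qre p * qre q + qi p * qi q + qj p * qj q + qk p * qk q.
Definition qadd (p q : quat) : quat := Quat (qre p + qre q) (qi p + qi q) (qj p + qj q) (qk p + qk q).

Lemma vnorm2_ge0 n (v : 'rV[R]_n) : 0 <= vnorm2 v.
Proof. by apply: sumr_ge0 => j _; rewrite sqr_ge0. Qed.

Lemma vnorm2Z n c (v : 'rV[R]_n) : vnorm2 (c *: v) = c ^+ 2 * vnorm2 v.
Proof.
rewrite /vnorm2 mulr_sumr; apply: eq_bigr => j _; rewrite mxE; ring.
Qed.

Lemma vnorm2_eq0 n (v : 'rV[R]_n) : vnorm2 v = 0 -> v = 0.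
Proof.
move=> h; apply/rowP => j; rewrite mxE.
have : v 0 j ^+ 2 = 0.
  apply/eqP; rewrite eq_le sqr_ge0 andbT -h /vnorm2.
  rewrite (bigD1 j) //= lerDl; apply: sumr_ge0 => i _; exact: sqr_ge0.
by move/eqP; rewrite expf_eq0 /= => /eqP.
Qed.

Lemma vpolar n a b (u v : 'rV[R]_n) :
  vnorm2 (a *: u - b *: v) = a ^+ 2 * vnorm2 u + b ^+ 2 * vnorm2 v - 2 * a * b * vdot u v.
Proof.
rewrite /vnorm2 /vdot !mulr_sumr -big_split -sumrB /=; apply: eq_bigr => j _.
rewrite !mxE; ring.
Qed.

Lemma qpolar a b (p q : quat) :
  qnorm2 (qsub (qscale a p) (qscale b q)) = a ^+ 2 * qnorm2 p + b ^+ 2 * qnorm2 q - 2 * a * b * qdot p q.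
Proof. rewrite /qnorm2 /qdot /=; ring. Qed.

Lemma qsub_ab (p q : quat) : qsub p q = qsub (qscale 1 p) (qscale 1 q).
Proof. by rewrite !qscale1. Qed.

Lemma qnorm2_add (x y : quat) : qnorm2 (qadd x y) <= 2 * qnorm2 x + 2 * qnorm2 y.
Proof.
rewrite /qnorm2 /=.
have h : forall u v : R, (u + v) ^+ 2 <= 2 * u ^+ 2 + 2 * v ^+ 2.
  move=> u v; have := sqr_ge0 (u - v); nra.
have := h (qre x) (qre y); have := h (qi x) (qi y);
have := h (qj x) (qj y); have := h (qk x) (qk y); lra.
Qed.

Lemma qnorm2_subM (p P q Q : quat) :
  qnorm2 (qsub (qmul p P) (qmul q Q)) <=
  2 * qnorm2 p * qnorm2 (qsub P Q) + 2 * qnorm2 (qsub p q) * qnorm2 Q.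
Proof.
have -> : qsub (qmul p P) (qmul q Q) = qadd (qmul p (qsub P Q)) (qmul (qsub p q) Q).
  apply: quatE => /=; ring.
by rewrite -!mulrA -!qnorm2M; apply: qnorm2_add.
Qed.

Lemma qprod_le1 n (f : 'I_n -> quat) : (forall i, qnorm2 (f i) <= 1) ->
  qnorm2 (\big[qmul/qone]_(i < n) f i) <= 1.
Proof.
move=> h; rewrite qnorm2_prod; apply: prodr_ile1 => i _.
by rewrite qnorm2_ge0 h.
Qed.

Lemma qprod_sub n (f g : 'I_n -> quat) :
  (forall i, qnorm2 (f i) <= 1) -> (forall i, qnorm2 (g i) <= 1) ->
  qnorm2 (qsub (\big[qmul/qone]_(i < n) f i) (\big[qmul/qone]_(i < n) g i))
   <= 2 ^+ n * \sum_(i < n) qnorm2 (qsub (f i) (g i)).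
Proof.
elim: n f g => [|n IH] f g hf hg.
  rewrite !big_ord0 /qnorm2 /=. lra.
rewrite !big_ord_recl.
apply: le_trans (qnorm2_subM _ _ _ _) _.
have h1 := IH (fun i => f (lift ord0 i)) (fun i => g (lift ord0 i))
  (fun i => hf _) (fun i => hg _).
have hP := qprod_le1 (fun i => hg (lift ord0 i)).
set A := qnorm2 (qsub _ _) in h1 *.
set B := qnorm2 (qsub (f ord0) (g ord0)).
set S := \sum_(i < n) _ in h1 *.
have A0 : 0 <= A by exact: qnorm2_ge0.
have B0 : 0 <= B by exact: qnorm2_ge0.
have S0 : 0 <= S by apply: sumr_ge0 => i _; exact: qnorm2_ge0.
have f0 := hf ord0; have f00 := qnorm2_ge0 (f ord0).
have Q0 := qnorm2_ge0 (\big[qmul/qone]_(i < n) g (lift ord0 i)).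
have e2 : 1 <= 2 ^+ n :> R by rewrite exprn_ege1 // ler1n.
rewrite exprS.
have : 2 * qnorm2 (f ord0) * A <= 2 * A by nra.
have : 2 * B * qnorm2 (\big[qmul/qone]_(i < n) g (lift ord0 i)) <= 2 * B by nra.
have : 2 * B <= 2 * 2 ^+ n * B by nra.
have : 2 * A <= 2 * 2 ^+ n * S by nra.
nra.
Qed.

Lemma prod_ge_sum (I : Type) (r : seq I) (t : I -> R) :
  (forall i, 0 <= t i <= 1) ->
  1 - \sum_(i <- r) t i <= \prod_(i <- r) (1 - t i).
Proof.
move=> ht; elim: r => [|x r IH]; first by rewrite !big_nil subr0.
rewrite !big_cons.
have S0 : 0 <= \sum_(i <- r) t i by apply: sumr_ge0 => i _; have /andP[] := ht i.
have /andP[t0 t1] := ht x.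
have : (1 - t x) * (1 - \sum_(i <- r) t i) <= (1 - t x) * \prod_(i <- r) (1 - t i).
  by apply: ler_wpM2l; lra.
nra.
Qed.

End V.


Section T.
Variable R : realType.
Local Notation quat := (quat R).
Local Notation qmul := (@qmul R).
Local Notation qone := (@qone R).
Variables (k : nat) (m : 'I_k -> nat).
Local Notation dpt := (dpt R m).
Local Notation tpt := (tpt R m).

Definition Ntp (y : tpt) : R := \sum_(i < k) vnorm2 (y.1 i) + qnorm2 y.2.
Definition tdotp (y z : tpt) : R := \sum_(i < k) vdot (y.1 i) (z.1 i) + qdot y.2 z.2.
Definition tscale (c : R) (y : tpt) : tpt := (fun i => c *: y.1 i, qscale c y.2).
Definition Fa (a : dpt) : tpt := (fun i => (a i).1, qprod a).

Lemma tpolar a b (y z : tpt) :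
  tdist2 (tscale a y) (tscale b z) = a ^+ 2 * Ntp y + b ^+ 2 * Ntp z - 2 * a * b * tdotp y z.
Proof.
rewrite /tdist2 /Ntp /tdotp /= qpolar.
have -> : \sum_(i < k) vnorm2 (a *: y.1 i - b *: z.1 i) =
  a ^+ 2 * \sum_(i < k) vnorm2 (y.1 i) + b ^+ 2 * \sum_(i < k) vnorm2 (z.1 i)
  - 2 * a * b * \sum_(i < k) vdot (y.1 i) (z.1 i).
  rewrite !mulr_sumr -big_split -sumrB /=; apply: eq_bigr => i _; exact: vpolar.
ring.
Qed.

Lemma tdist_plain (y z : tpt) : tdist2 y z = Ntp y + Ntp z - 2 * tdotp y z.
Proof.
have -> : tdist2 y z = tdist2 (tscale 1 y) (tscale 1 z).
  rewrite /tdist2 /tscale /= !qscale1; congr (_ + _).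
  by apply: eq_bigr => i _; rewrite !scale1r.
rewrite tpolar; ring.
Qed.

Lemma tdist2_ge0 (y z : tpt) : 0 <= tdist2 y z.
Proof.
rewrite /tdist2 addr_ge0 ?qnorm2_ge0 //; apply: sumr_ge0 => i _; exact: vnorm2_ge0.
Qed.

Lemma Ntp_scale c (y : tpt) : Ntp (tscale c y) = c ^+ 2 * Ntp y.
Proof.
rewrite /Ntp /tscale /= qnorm2Z [RHS]mulrDr [X in _ = X + _]mulr_sumr; congr (_ + _).
by apply: eq_bigr => i _; rewrite vnorm2Z.
Qed.

Lemma proj_eq (a : dpt) : proj a = tscale (Num.sqrt (Ntp (Fa a)))^-1 (Fa a).
Proof. by []. Qed.

Lemma dom_q (a : dpt) i : in_dom a -> qnorm2 (a i).2 = 1 - vnorm2 (a i).1.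
Proof. move=> h; rewrite -(h i); ring. Qed.

Lemma dom_bounds (a : dpt) i : in_dom a ->
  0 <= vnorm2 (a i).1 <= 1 /\ 0 <= qnorm2 (a i).2 <= 1.
Proof.
move=> h; have := h i; have := vnorm2_ge0 (a i).1; have := qnorm2_ge0 (a i).2.
move=> h1 h2 h3; split; apply/andP; split; lra.
Qed.

Lemma NFa_ge1 (a : dpt) : in_dom a -> 1 <= Ntp (Fa a).
Proof.
move=> h; rewrite /Ntp /Fa /= /qprod qnorm2_prod.
have -> : \prod_(i < k) qnorm2 (a i).2 = \prod_(i < k) (1 - vnorm2 (a i).1).
  by apply: eq_bigr => i _; rewrite dom_q.
have := @prod_ge_sum R _ (index_enum 'I_k) (fun i => vnorm2 (a i).1).
move=> /(_ _) H; have {}H := H (fun i => (dom_bounds i h).1).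
move: H; rewrite /index_enum; lra.
Qed.

Lemma part1 (a : dpt) : in_dom a -> in_tgt (proj a).
Proof.
move=> h; have N1 := NFa_ge1 h.
rewrite /in_tgt -/(Ntp (proj a)) proj_eq Ntp_scale exprVn sqr_sqrtr; last lra.
by rewrite mulVf //; apply/eqP => e; rewrite e in N1; lra.
Qed.

Lemma normalize (y z : tpt) : 1 <= Ntp y -> 1 <= Ntp z ->
  tdist2 (tscale (Num.sqrt (Ntp y))^-1 y) (tscale (Num.sqrt (Ntp z))^-1 z) <= tdist2 y z.
Proof.
move=> hy hz; rewrite tpolar tdist_plain.
have D0 := tdist2_ge0 y z; rewrite tdist_plain in D0.
set s := Num.sqrt (Ntp y); set t := Num.sqrt (Ntp z); set D := tdotp y z.
have s2 : s ^+ 2 = Ntp y by rewrite sqr_sqrtr //; lra.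
have t2 : t ^+ 2 = Ntp z by rewrite sqr_sqrtr //; lra.
have s1 : 1 <= s by rewrite -sqrtr1 ler_sqrt //; lra.
have t1 : 1 <= t by rewrite -sqrtr1 ler_sqrt //; lra.
have sa : s * s^-1 = 1 by rewrite mulfV //; apply/eqP => e; rewrite e in s1; lra.
have tb : t * t^-1 = 1 by rewrite mulfV //; apply/eqP => e; rewrite e in t1; lra.
rewrite -s2 -t2 in D0 *.
set a := s^-1 in sa *; set b := t^-1 in tb *.
have a0 : 0 < a by rewrite /a invr_gt0; lra.
have b0 : 0 < b by rewrite /b invr_gt0; lra.
have e1 : a ^+ 2 * s ^+ 2 = 1 by rewrite -exprMn mulrC sa expr1n.
have e2 : b ^+ 2 * t ^+ 2 = 1 by rewrite -exprMn mulrC tb expr1n.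
rewrite e1 e2.
have hst : 1 <= s * t by nra.
have hab : (s * t) * (a * b) = 1 by rewrite mulrACA sa tb mulr1.
have ab0 : 0 <= a * b by nra.
have ab1 : a * b <= 1 by nra.
rewrite -/D in D0. have h1 : 0 <= (s ^+ 2 + t ^+ 2 - 2 * D) * (1 - a * b) by apply: mulr_ge0; lra.
have h2 : 0 <= (a * b) * (s - t) ^+ 2 by apply: mulr_ge0 => //; exact: sqr_ge0.
have h3 : 2 * (a * b) * (s * t) = 2 by rewrite mulrC in hab; rewrite -mulrA hab mulr1.
nra.
Qed.


Lemma Fa_dist (a b : dpt) : in_dom a -> in_dom b ->
  tdist2 (Fa a) (Fa b) <= 2 ^+ k * ddist2 a b.
Proof.
move=> ha hb; rewrite /tdist2 /Fa /= /ddist2 big_split /=.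
have hq := @qprod_sub R k (fun i => (a i).2) (fun i => (b i).2)
  (fun i => (andP (dom_bounds i ha).2).2) (fun i => (andP (dom_bounds i hb).2).2).
rewrite /qprod.
set V := \sum_(i < k) _ in hq *.
set W := \sum_(i < k) vnorm2 _.
have V0 : 0 <= V by apply: sumr_ge0 => i _; exact: qnorm2_ge0.
have W0 : 0 <= W by apply: sumr_ge0 => i _; exact: vnorm2_ge0.
have e2 : 1 <= 2 ^+ k :> R by rewrite exprn_ege1 // ler1n.
have : W <= 2 ^+ k * W by nra.
rewrite mulrDr; lra.
Qed.

Lemma part4 (a : dpt) : in_dom a -> forall e : R, 0 < e ->
  exists d : R, 0 < d /\ forall b, in_dom b -> ddist2 a b < d ->
    tdist2 (proj a) (proj b) < e.
Proof.
move=> ha e e0.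
have p0 : 0 < 2 ^+ k :> R by rewrite exprn_gt0.
exists (e / 2 ^+ k); split; first by rewrite divr_gt0.
move=> b hb hd.
rewrite !proj_eq; apply: le_lt_trans (normalize (NFa_ge1 ha) (NFa_ge1 hb)) _.
apply: le_lt_trans (Fa_dist ha hb) _.
by rewrite mulrC -ltr_pdivlMr.
Qed.

End T.


Section F.
Variable R : realType.
Local Notation quat := (quat R).
Local Notation qmul := (@qmul R).
Local Notation qone := (@qone R).

Lemma scale_unique n (T : 'I_n -> R) (u : R) :
  (forall i, 0 <= T i <= 1) -> 0 < u -> (forall i, u * T i <= 1) ->
  \prod_(i < n) (1 - u * T i) = u * \prod_(i < n) (1 - T i) -> u = 1.
Proof.
move=> hT u0 huT he.
have P0 : 0 <= \prod_(i < n) (1 - T i).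
  by apply: prodr_ge0 => i _; have /andP[] := hT i; lra.
have [ult|ugt|//] := ltgtP u 1.
- have hle : \prod_(i < n) (1 - T i) <= \prod_(i < n) (1 - u * T i).
    apply: ler_prod => i _; have /andP[t0 t1] := hT i; apply/andP; split; first lra.
    by nra.
  have [Pz|Ppos] := eqVneq (\prod_(i < n) (1 - T i)) 0.
    have : 0 < \prod_(i < n) (1 - u * T i).
      by apply: prodr_gt0 => i _; have /andP[t0 t1] := hT i; nra.
    by rewrite he Pz mulr0 ltxx.
  have Pp : 0 < \prod_(i < n) (1 - T i) by rewrite lt_def Ppos P0.
  nra.
- have hle : \prod_(i < n) (1 - u * T i) <= \prod_(i < n) (1 - T i).
    apply: ler_prod => i _; have /andP[t0 t1] := hT i; have := huT i.
    move=> h; apply/andP; split; [lra|nra].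
  have [Pz|Ppos] := eqVneq (\prod_(i < n) (1 - T i)) 0.
    move/eqP: Pz => /prodf_eq0 [j _ /eqP hj].
    have := huT j; have -> : T j = 1 by lra.
    lra.
  have Pp : 0 < \prod_(i < n) (1 - T i) by rewrite lt_def Ppos P0.
  nra.
Qed.

Lemma telescope n (f : 'I_n -> quat) (S : nat -> quat) :
  (forall j, qnorm2 (S j) = 1) ->
  \big[qmul/qone]_(i < n) qmul (qmul (S i) (f i)) (qinv (S i.+1)) =
  qmul (qmul (S 0%N) (\big[qmul/qone]_(i < n) f i)) (qinv (S n)).
Proof.
move=> hS; elim: n f => [|n IH] f.
  rewrite !big_ord0 qmulq1 qmulV //; rewrite hS; exact: oner_neq0.
rewrite !big_ord_recr /= (IH (fun i => f (widen_ord (leqnSn n) i))) /=.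
rewrite -!qmulA; congr (qmul (S 0%N) _).
rewrite !qmulA; congr (qmul _ _).
rewrite -!qmulA; congr (qmul _ _).
by rewrite !qmulA qmulVq ?qmul1q // hS oner_neq0.
Qed.

Section Orb.
Variables (n : nat) (Q P : nat -> quat).
Hypothesis hnorm : forall i, qnorm2 (P i) = qnorm2 (Q i).
Hypothesis hprod : \big[qmul/qone]_(i < n) Q i = \big[qmul/qone]_(i < n) P i.

Fixpoint Lr (j : nat) : quat :=
  if j is j'.+1 then
    (if qnorm2 (Q j') == 0 then qone else qmul (qmul (qinv (P j')) (Lr j')) (Q j'))
  else qone.

Fixpoint Rr (j : nat) : quat :=
  if j is j'.+1 then
    (if qnorm2 (Q (n - j'.+1)%N) == 0 then qone
     else qmul (qmul (P (n - j'.+1)%N) (Rr j')) (qinv (Q (n - j'.+1)%N)))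
  else qone.

Lemma Lr_unit j : qnorm2 (Lr j) = 1.
Proof.
elim: j => [|j IH] /=; first exact: qnorm2_one.
case: ifP => hz; first exact: qnorm2_one.
by rewrite !qnorm2M qnorm2_inv IH mulr1 hnorm mulVf // hz.
Qed.

Lemma Rr_unit j : qnorm2 (Rr j) = 1.
Proof.
elim: j => [|j IH] /=; first exact: qnorm2_one.
case: ifP => hz; first exact: qnorm2_one.
by rewrite !qnorm2M qnorm2_inv IH mulr1 hnorm mulfV // hz.
Qed.

Lemma zeroQP i : qnorm2 (Q i) == 0 -> Q i = qzero R /\ P i = qzero R.
Proof.
move/eqP=> h; split; apply: qnorm2_eq0 => //; by rewrite hnorm.
Qed.

Lemma step_zero (x y : quat) i : qnorm2 (Q i) == 0 -> P i = qmul (qmul x (Q i)) y.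
Proof. by move=> /zeroQP [-> ->]; rewrite qmulq0 qmul0q. Qed.

Lemma step_L i : P i = qmul (qmul (Lr i) (Q i)) (qinv (Lr i.+1)).
Proof.
rewrite /=; case: ifP => hz; first exact: step_zero.
rewrite !qinvM qinvK.
have hL : qnorm2 (Lr i) != 0 by rewrite Lr_unit oner_neq0.
rewrite !qmulA -[qmul (qmul (Lr i) (Q i)) (qinv (Q i))]qmulA qmulV ?hz //.
by rewrite qmulq1 qmulV // qmul1q.
Qed.

Lemma step_R i : (i < n)%N ->
  P i = qmul (qmul (Rr (n - i)) (Q i)) (qinv (Rr (n - i.+1))).
Proof.
move=> hi.
have -> : (n - i = (n - i.+1).+1)%N by lia.
rewrite /=.
have -> : (n - (n - i.+1).+1 = i)%N by lia.
case: ifP => hz; first exact: step_zero.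
have hR : qnorm2 (Rr (n - i.+1)) != 0 by rewrite Rr_unit oner_neq0.
rewrite -!qmulA [qmul (qinv (Q i)) _]qmulA qmulVq ?hz // qmul1q qmulV // qmulq1 //.
Qed.

Lemma pref_L j : (forall i, (i < n)%N -> qnorm2 (Q i) != 0) -> (j <= n)%N ->
  qmul (\big[qmul/qone]_(i < j) P i) (Lr j) = \big[qmul/qone]_(i < j) Q i.
Proof.
move=> hnz; elim: j => [|j IH] hj; first by rewrite !big_ord0 qmulq1.
rewrite !big_ord_recr /= -IH; last lia.
have hQ := hnz j hj; rewrite (negbTE hQ).
have hP : qnorm2 (P j) != 0 by rewrite hnorm.
by rewrite !qmulA -[qmul (qmul _ (P j)) (qinv (P j))]qmulA qmulV // qmulq1.
Qed.

Lemma orbit_constr : exists s : nat -> quat,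
  [/\ s 0%N = qone, s n = qone, (forall j, qnorm2 (s j) = 1) &
      forall i, (i < n)%N -> P i = qmul (qmul (s i) (Q i)) (qinv (s i.+1))].
Proof.
have [/hasP [z zin hz]|hnz] := boolP (has (fun i => qnorm2 (Q i) == 0) (iota 0 n)).
  have zn : (z < n)%N by move: zin; rewrite mem_iota; lia.
  exists (fun j => if (j <= z)%N then Lr j else Rr (n - j)); split => //.
  - by rewrite leqNgt zn subnn.
  - by move=> j; case: ifP => _; [exact: Lr_unit | exact: Rr_unit].
  move=> i hi.
  case: (ltngtP i z) => hiz.
  - exact: step_L.
  - exact: step_R.
  - by subst i; apply: step_zero; rewrite hz.
have hnz' : forall i, (i < n)%N -> qnorm2 (Q i) != 0.
  move=> i hi; apply/negP => h; move/hasP: hnz; apply; exists i => //.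
  by rewrite mem_iota; lia.
exists (fun j => if (j < n)%N then Lr j else qone); split => //.
- by case: ifP.
- by rewrite ltnn.
- by move=> j; case: ifP => _; [exact: Lr_unit | exact: qnorm2_one].
move=> i hi; rewrite hi.
case: (ltnP i.+1 n) => hin; first exact: step_L.
have ein : n = i.+1 by lia.
rewrite qinv_one qmulq1.
have := pref_L hnz' (ltnW hi).
move: hprod; rewrite ein !big_ord_recr /= => hp.
set X := \big[qmul/qone]_(j < i) P j in hp *.
move=> e; rewrite -e in hp.
have hX : qnorm2 X != 0.
  rewrite qnorm2_prod; apply/prodf_neq0 => j _.
  rewrite hnorm; apply: hnz'; rewrite ein; exact: ltn_trans (ltn_ord j) _.
have : qmul (qinv X) (qmul (qmul X (Lr i)) (Q i)) = qmul (qinv X) (qmul X (P i)).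
  by rewrite hp.
by rewrite !qmulA qmulVq // !qmul1q => ->.
Qed.


End Orb.

End F.


Section P3s.
Variable R : realType.
Local Notation quat := (quat R).
Local Notation qmul := (@qmul R).
Local Notation qone := (@qone R).
Variables (k : nat) (m : 'I_k -> nat).
Local Notation dpt := (dpt R m).
Local Notation tpt := (tpt R m).

Definition nfun (F : 'I_k -> quat) (j : nat) : quat :=
  if insub j is Some o then F o else qone.

Lemma nfunE F (i : 'I_k) : nfun F i = F i.
Proof. by rewrite /nfun valK. Qed.

Lemma big_nfun F : \big[qmul/qone]_(i < k) F i = \big[qmul/qone]_(i < k) nfun F i.
Proof. by apply: eq_bigr => i _; rewrite nfunE. Qed.

Lemma nfun_norm F G : (forall i, qnorm2 (G i) = qnorm2 (F i)) ->
  forall j, qnorm2 (nfun G j) = qnorm2 (nfun F j).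
Proof. by move=> h j; rewrite /nfun; case: insubP => [o _ _|_] //. Qed.

Lemma rgetE (s : nat -> quat) j :
  rget (fun o : 'I_k.-1 => s o.+1) j = if (j < k.-1)%N then s j.+1 else qone.
Proof.
rewrite /rget; have [hj|hj] := boolP (j < k.-1)%N.
  by rewrite (insubT (fun j => j < k.-1)%N hj) /=.
by rewrite insubF //; apply/negbTE.
Qed.

Lemma rget_unit (r : 'I_k.-1 -> quat) j : unit_tuple r -> qnorm2 (rget r j) = 1.
Proof. by move=> hr; rewrite /rget; case: insubP => [o _ _|_]; [exact: hr|exact: qnorm2_one]. Qed.

Lemma Fa_eq (a b : dpt) : (forall i, (b i).1 = (a i).1) -> qprod b = qprod a -> Fa b = Fa a.
Proof.
move=> h1 h2; rewrite /Fa h2; congr pair.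
by apply: functional_extensionality_dep => i; rewrite h1.
Qed.

Lemma qprod_act (r : 'I_k.-1 -> quat) (a : dpt) : unit_tuple r ->
  qprod (act r a) = qprod a.
Proof.
move=> hr; rewrite /qprod /act /=.
pose S (j : nat) := if j == 0%N then qone else rget r j.-1.
have hS : forall j, qnorm2 (S j) = 1.
  by move=> [|j]; rewrite /S /=; [exact: qnorm2_one | exact: rget_unit].
transitivity (\big[qmul/qone]_(i < k) qmul (qmul (S i) (a i).2) (qinv (S i.+1))).
  by [].
rewrite (telescope (fun i : 'I_k => (a i).2) hS) /S /= qmul1q.
have -> : (if k == 0%N then qone else rget r k.-1) = qone.
  by case: eqP => // _; rewrite /rget insubF ?ltnn.
by rewrite qinv_one qmulq1.
Qed.


Lemma orbit_proj (a b : dpt) : same_orbit a b -> proj a = proj b.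
Proof.
move=> [r [hr hb]].
have h1 : forall i, (b i).1 = (a i).1 by move=> i; rewrite hb.
have h2 : qprod b = qprod a.
  rewrite -(qprod_act a hr) /qprod; apply: eq_bigr => i _; by rewrite hb.
by rewrite !proj_eq (Fa_eq h1 h2).
Qed.

Lemma proj_orbit (a b : dpt) : in_dom a -> in_dom b -> proj a = proj b -> same_orbit a b.
Proof.
move=> ha hb e.
have Na := NFa_ge1 ha; have Nb := NFa_ge1 hb.
rewrite !proj_eq in e.
set sa := Num.sqrt (Ntp (Fa a)) in e; set sb := Num.sqrt (Ntp (Fa b)) in e.
have sa1 : 1 <= sa by rewrite -sqrtr1 ler_sqrt //; lra.
have sb1 : 1 <= sb by rewrite -sqrtr1 ler_sqrt //; lra.
have sa0 : sa != 0 by apply/eqP => h; rewrite h in sa1; lra.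
have sb0 : sb != 0 by apply/eqP => h; rewrite h in sb1; lra.
set c := sb / sa.
have c0 : 0 < c by rewrite divr_gt0 //; lra.
have hx : forall i, (b i).1 = c *: (a i).1.
  move=> i; have := congr1 (fun y => y.1 i) e => /= /(congr1 (fun v => sb *: v)).
  by rewrite !scalerA mulfV // scale1r => <-.
have hQ : qprod b = qscale c (qprod a).
  have := congr1 snd e => /= /(congr1 (qscale sb)).
  by rewrite !qscaleA mulfV // qscale1 => <-.
have hT : forall i, vnorm2 (b i).1 = c ^+ 2 * vnorm2 (a i).1.
  by move=> i; rewrite hx vnorm2Z.
have hu : c ^+ 2 = 1.
  apply: (@scale_unique R k (fun i => vnorm2 (a i).1)).
  - by move=> i; have [] := dom_bounds i ha.
  - by rewrite exprn_gt0.
  - by move=> i; rewrite -hT; have [/andP[]] := dom_bounds i hb.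
  have := congr1 (@qnorm2 R) hQ; rewrite qnorm2Z /qprod !qnorm2_prod.
  have -> : \prod_(i < k) qnorm2 (b i).2 = \prod_(i < k) (1 - c ^+ 2 * vnorm2 (a i).1).
    by apply: eq_bigr => i _; rewrite dom_q // hT.
  have -> : \prod_(i < k) qnorm2 (a i).2 = \prod_(i < k) (1 - vnorm2 (a i).1).
    by apply: eq_bigr => i _; rewrite dom_q.
  done.
have c1 : c = 1 by nra.
have hx1 : forall i, (b i).1 = (a i).1 by move=> i; rewrite hx c1 scale1r.
have hQ1 : qprod b = qprod a by rewrite hQ c1 qscale1.
have hn : forall i, qnorm2 (b i).2 = qnorm2 (a i).2.
  by move=> i; rewrite !dom_q // hx1.
have [s [s0 sk su sP]] := orbit_constr (nfun_norm hn)
  (etrans (esym (big_nfun _)) (etrans (esym hQ1) (big_nfun _))).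
exists (fun o : 'I_k.-1 => s o.+1); split; first by move=> j; exact: su.
move=> i; rewrite /act [b i]surjective_pairing hx1; congr pair.
have := sP i (ltn_ord i); rewrite !nfunE => ->.
congr (qmul (qmul _ _) (qinv _)).
  case: eqP => [->|hi] //.
  rewrite rgetE ifT; last by have := ltn_ord i; lia.
  by congr s; lia.
rewrite rgetE; case: ifP => // hi.
by have -> : i.+1 = k by have := ltn_ord i; lia.
Qed.

End P3s.


Lemma root_exists (R : realType) (n : nat) (T : 'I_n -> R) (Pq : R) :
  (forall i, 0 <= T i) -> 0 <= Pq -> \sum_(i < n) T i + Pq = 1 ->
  exists u, [/\ 1 <= u, forall i, u * T i <= 1 & \prod_(i < n) (1 - u * T i) = u * Pq].
Proof.
move=> T0 P0 hs.
have [/forallP hz|] := boolP [forall i, T i == 0].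
  have e : \sum_(i < n) T i = 0 by apply: big1 => i _; exact/eqP.
  rewrite e in hs.
  exists 1; split => //.
  - by move=> i; rewrite (eqP (hz i)) mulr0 ler01.
  rewrite big1 ?mul1r; first lra.
  by move=> i _; rewrite (eqP (hz i)) mulr0 subr0.
move=> /forallPn [i0 hi0].
have [j _ hj] : exists2 j, true & forall i, T i <= T j.
  case: (@arg_maxP _ _ _ i0 predT T (erefl _)) => j _ hj.
  by exists j => // i; apply: hj.
have Tj0 : 0 < T j by rewrite lt_def; apply/andP; split;
  [apply/negP => /eqP h; have := hj i0; rewrite h => h'; move: hi0; rewrite eq_le h' T0 | exact: T0].
have Tj1 : T j <= 1.
  have : T j <= \sum_(i < n) T i.
    by rewrite (bigD1 j) //= lerDl; apply: sumr_ge0 => i _.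
  lra.
set M := (T j)^-1.
have M1 : 1 <= M by rewrite /M invf_ge1 //.
have MT : M * T j = 1 by rewrite /M mulVf //; apply/eqP => h; rewrite h in Tj0; lra.
pose p : {poly R} := Pq *: 'X - \prod_(i < n) (1 - T i *: 'X).
have hp : forall x, p.[x] = Pq * x - \prod_(i < n) (1 - T i * x).
  move=> x; rewrite /p hornerD hornerN hornerZ hornerX horner_prod; congr (_ - _).
  by apply: eq_bigr => i _; rewrite hornerD hornerN hornerZ hornerX hornerC.
have := @poly_ivt R p 1 M M1.
rewrite !hp.
case.
  apply/andP; split.
    have := @prod_ge_sum R _ (index_enum 'I_n) T.
    move=> /(_ (fun i => _)) H.
    have {}H : 1 - \sum_(i < n) T i <= \prod_(i < n) (1 - T i).
      apply: H => i; apply/andP; split => //.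
      have : T i <= T j := hj i. lra.
    have -> : \prod_(i < n) (1 - T i * 1) = \prod_(i < n) (1 - T i).
      by apply: eq_bigr => i _; rewrite mulr1.
    lra.
  rewrite (bigD1 j) //= [T j * M]mulrC MT subrr mul0r subr0.
  by apply: mulr_ge0 => //; lra.
move=> u /andP[u1 uM] /rootP; rewrite hp => hu.
exists u; split => //.
- move=> i; have := hj i; have := T0 i => h1 h2.
  have : u * T i <= M * T j by apply: ler_pM => //; lra.
  by rewrite MT.
- have -> : \prod_(i < n) (1 - u * T i) = \prod_(i < n) (1 - T i * u).
    by apply: eq_bigr => i _; rewrite mulrC.
  rewrite mulrC; lra.
Qed.

Lemma big_qscale (R : realType) n (f : 'I_n -> R) (h : 'I_n -> quat R) :
  \big[@qmul R/@qone R]_(i < n) qscale (f i) (h i) =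
  qscale (\prod_(i < n) f i) (\big[@qmul R/@qone R]_(i < n) h i).
Proof.
elim: n f h => [|n IH] f h; first by rewrite !big_ord0 qscale1.
rewrite !big_ord_recl IH; apply: quatE => /=; ring.
Qed.

Section Surj.
Variable R : realType.
Local Notation quat := (quat R).
Local Notation qmul := (@qmul R).
Local Notation qone := (@qone R).
Variables (n : nat) (m : 'I_n.+1 -> nat).
Local Notation dpt := (dpt R m).
Local Notation tpt := (tpt R m).

Lemma part2 (y : tpt) : in_tgt y -> exists a : dpt, in_dom a /\ proj a = y.
Proof.
move=> hy.
pose T i := vnorm2 (y.1 i); pose Pq := qnorm2 y.2.
have [u [u1 huT hu]] := @root_exists R n.+1 T Pq (fun i => vnorm2_ge0 _)
  (qnorm2_ge0 _) hy.
pose lam := Num.sqrt u.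
have lam2 : lam ^+ 2 = u by rewrite sqr_sqrtr //; lra.
have lam0 : 0 < lam by rewrite sqrtr_gt0; lra.
pose nn i := Num.sqrt (1 - u * T i).
have nn2 : forall i, nn i ^+ 2 = 1 - u * T i.
  by move=> i; rewrite sqr_sqrtr // subr_ge0.
pose N0 := \prod_(i < n) nn (lift ord0 i).
pose w : quat := if N0 != 0 then qscale (lam / N0) y.2 else qreal (nn ord0).
pose a : dpt := fun i => (lam *: y.1 i, if i == ord0 then w else qreal (nn i)).
have hall : \prod_(i < n.+1) (1 - u * T i) = nn ord0 ^+ 2 * N0 ^+ 2.
  rewrite big_ord_recl nn2 /N0 -prodrXl; congr (_ * _).
  by apply: eq_bigr => i _; rewrite nn2.
have hw : qnorm2 w = nn ord0 ^+ 2.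
  rewrite /w; case: ifP => hN; last by rewrite qnorm2_real.
  rewrite qnorm2Z expr_div_n lam2 -/Pq. rewrite mulrAC -hu hall.
  by field; rewrite hN.
have hprod : qprod a = qscale lam y.2.
  rewrite /qprod big_ord_recl /= ?eqxx.
  have -> : \big[qmul/qone]_(i < n) (a (lift ord0 i)).2 = qreal N0.
    rewrite /N0 qreal_prod; apply: eq_bigr => i _ /=.
    done.
  rewrite qmul_realR /w; case: ifP => hN.
    by rewrite qscaleA mulrCA mulfV ?mulr1.
  move/negbFE/eqP: hN => hN.
  have : u * Pq = 0 by rewrite -hu hall hN expr0n /= mulr0.
  move/eqP; rewrite mulf_eq0 => /orP [/eqP h|/eqP h]; first by exfalso; lra.
  rewrite (qnorm2_eq0 h) hN.
  by apply: quatE => /=; ring.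
have hdom : in_dom a.
  move=> i; rewrite /a /= vnorm2Z lam2 -/(T i).
  case: eqP => [->|hi]; first by rewrite hw nn2; ring.
  by rewrite qnorm2_real nn2; ring.
exists a; split => //.
have hN : Ntp (Fa a) = u.
  rewrite /Ntp /Fa /= hprod qnorm2Z lam2.
  have -> : \sum_(i < n.+1) vnorm2 (lam *: y.1 i) = u * \sum_(i < n.+1) T i.
    by rewrite mulr_sumr; apply: eq_bigr => i _; rewrite vnorm2Z lam2.
  by rewrite -mulrDr hy mulr1.
rewrite proj_eq hN -/lam /tscale /Fa /= hprod qscaleA mulVf ?qscale1; last by rewrite gt_eqF.
rewrite [y]surjective_pairing /=; congr pair.
apply: functional_extensionality_dep => i.
by rewrite scalerA mulVf ?scale1r // gt_eqF.
Qed.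

End Surj.

Module BWm.
Import all_classical all_reals all_analysis.
Import numFieldNormedType.Exports.

Lemma bw_real (R : realType) (u : nat -> R) : (forall n, `|u n| <= 1) ->
  exists f : nat -> nat, (forall n, (f n < f n.+1)%N) /\
  exists L : R, forall e, 0 < e -> exists N, forall n, (N <= n)%N -> `|u (f n) - L| < e.
Proof.
move=> hu.
have bu : bounded_fun u.
  exists 1; split => // M M1 x _; apply: le_trans (hu x) _; exact: ltW.
have [f finc /cvg_ex [L hL]] := bolzano_weierstrass bu.
exists f; split.
  move=> n; have h := finc n.+1 n; rewrite ltnNge; apply/negP => h2; have := h2; change ((f n.+1 <= f n)%O -> False); rewrite h; change ((n.+1 <= n)%N -> False); by rewrite ltnn.
exists L => e e0.
have := (cvgrPdist_lt _ _).1 hL e e0.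
case=> N _ hN; exists N => n hn; rewrite distrC; exact: hN.
Qed.

End BWm.
Import BWm.

Definition ev (P : nat -> Prop) := exists N, forall n, (N <= n)%N -> P n.

Lemma ev_and (P Q : nat -> Prop) : ev P -> ev Q -> ev (fun n => P n /\ Q n).
Proof.
move=> [N1 h1] [N2 h2]; exists (maxn N1 N2) => n hn; split.
  by apply: h1; apply: leq_trans hn; rewrite leq_maxl.
by apply: h2; apply: leq_trans hn; rewrite leq_maxr.
Qed.

Lemma ev_all (I : finType) (P : I -> nat -> Prop) :
  (forall i, ev (P i)) -> ev (fun n => forall i, P i n).
Proof.
move=> h.
have : forall s : seq I, ev (fun n => forall i, i \in s -> P i n).
  elim=> [|x s IH]; first by exists 0%N.
  have [N hN] := ev_and (h x) IH.
  exists N => n hn i; rewrite in_cons => /orP [/eqP ->|hi]; first exact: (hN n hn).1.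
  exact: (hN n hn).2.
move=> /(_ (enum I)) [N hN]; exists N => n hn i; apply: hN => //; by rewrite mem_enum.
Qed.

Lemma incr_lt (f : nat -> nat) : (forall n, (f n < f n.+1)%N) ->
  forall a b, (a < b)%N -> (f a < f b)%N.
Proof.
move=> hf a b; elim: b => [//|b IH]; rewrite ltnS leq_eqVlt => /orP [/eqP ->|h] //.
exact: ltn_trans (IH h) (hf b).
Qed.

Lemma incr_ge (f : nat -> nat) : (forall n, (f n < f n.+1)%N) -> forall n, (n <= f n)%N.
Proof.
move=> hf; elim=> [//|n IH]; exact: leq_ltn_trans IH (hf n).
Qed.

Lemma In_mem (T : eqType) (x : T) (s : seq T) : x \in s -> List.In x s.
Proof.
elim: s => [//|y s IH]; rewrite in_cons => /orP [/eqP ->|h]; [by left | by right; apply: IH].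
Qed.

Section BWL.
Variable R : realType.

Lemma bw_list (X : Type) (b : nat -> X) (cs : seq (X -> R)) :
  (forall c n, List.In c cs -> `|c (b n)| <= 1) ->
  exists f : nat -> nat, (forall n, (f n < f n.+1)%N) /\
    forall c, List.In c cs -> exists L : R, forall e, 0 < e ->
      ev (fun n => `|c (b (f n)) - L| < e).
Proof.
elim: cs => [|c cs IH] hb.
  by exists id; split => // c [].
have [f [finc hf]] := IH (fun c' n h => hb c' n (or_intror h)).
have [g [ginc [L hL]]] := @bw_real R (fun n => c (b (f n))) (fun n => hb c (f n) (or_introl erefl)).
exists (fun n => f (g n)); split.
  by move=> n; apply: incr_lt => //.
move=> c' [<-|hc'].
  by exists L => e e0; have [N hN] := hL e e0; exists N.
have [L' hL'] := hf c' hc'; exists L' => e e0.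
have [N hN] := hL' e e0; exists N => n hn; apply: hN.
exact: leq_trans hn (incr_ge ginc n).
Qed.

Lemma small_zero (z K : R) : 0 <= K -> (forall eta, 0 < eta -> eta <= 1 -> `|z| <= K * eta) -> z = 0.
Proof.
move=> K0 h; apply/eqP; apply: contraT => hz.
have z0 : 0 < `|z| by rewrite normr_gt0.
pose eta := Num.min 1 (`|z| / (K + 1)).
have e0 : 0 < eta by rewrite /eta lt_min ltr01 divr_gt0 //; lra.
have e1 : eta <= 1 by rewrite /eta ge_min lexx.
have e2 : eta <= `|z| / (K + 1) by rewrite /eta ge_min lexx orbT.
have := h eta e0 e1.
have : (K + 1) * eta <= `|z| by rewrite mulrC -ler_pdivlMr //; lra.
nra.
Qed.

Lemma sq_close (x y eta : R) : `|x| <= 1 -> 0 <= eta <= 1 -> `|x - y| <= eta ->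
  `|x ^+ 2 - y ^+ 2| <= 3 * eta.
Proof.
move=> hx /andP[e0 e1] hxy.
move: hx hxy; rewrite !ler_norml => /andP[h1 h2] /andP[h3 h4].
apply/andP; split; nra.
Qed.

Lemma sq_le (x eta : R) : `|x| <= eta -> x ^+ 2 <= eta ^+ 2.
Proof. rewrite ler_norml => /andP[h1 h2]; nra. Qed.

End BWL.

Section Cl.
Variable R : realType.
Variables (k : nat) (m : 'I_k -> nat).
Local Notation dpt := (dpt R m).

Definition blk i (x y : dpt) (eta : R) :=
  (forall j, `|(x i).1 0 j - (y i).1 0 j| <= eta) /\
  [/\ `|qre (x i).2 - qre (y i).2| <= eta, `|qi (x i).2 - qi (y i).2| <= eta,
      `|qj (x i).2 - qj (y i).2| <= eta & `|qk (x i).2 - qk (y i).2| <= eta].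

Definition Cm : R := \sum_(i < k) ((m i - 3)%:R + 4).

Lemma Cm_ge0 : 0 <= Cm.
Proof. by apply: sumr_ge0 => i _; apply: addr_ge0. Qed.

Lemma blk_dist (x y : dpt) eta : (forall i, blk i x y eta) -> ddist2 x y <= Cm * eta ^+ 2.
Proof.
move=> h; rewrite /ddist2 /Cm mulr_suml; apply: ler_sum => i _.
have [hv [h1 h2 h3 h4]] := h i.
rewrite mulrDl; apply: lerD.
  rewrite /vnorm2 mulr_natl -[X in _ <= _ *+ X]card_ord -sumr_const.
  apply: ler_sum => j _; rewrite !mxE; apply: sq_le; exact: hv.
rewrite /qnorm2 /=.
have := sq_le h1; have := sq_le h2; have := sq_le h3; have := sq_le h4; lra.
Qed.

Lemma sq_le1 (t : R) : t ^+ 2 <= 1 -> `|t| <= 1.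
Proof. move=> h; rewrite ler_norml; apply/andP; split; nra. Qed.

Lemma coord_bound (x : dpt) i : in_dom x ->
  (forall j, `|(x i).1 0 j| <= 1) /\
  [/\ `|qre (x i).2| <= 1, `|qi (x i).2| <= 1, `|qj (x i).2| <= 1 & `|qk (x i).2| <= 1].
Proof.
move=> hx; have := hx i; have := vnorm2_ge0 (x i).1.
have := sqr_ge0 (qre (x i).2); have := sqr_ge0 (qi (x i).2);
have := sqr_ge0 (qj (x i).2); have := sqr_ge0 (qk (x i).2).
rewrite /qnorm2 => s1 s2 s3 s4 v0 e.
split; last by split; apply: sq_le1; lra.
move=> j; apply: sq_le1.
have : (x i).1 0 j ^+ 2 <= vnorm2 (x i).1.
  rewrite /vnorm2 (bigD1 j) //= lerDl; apply: sumr_ge0 => l _; exact: sqr_ge0.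
lra.
Qed.

Lemma blk_val (x y : dpt) i eta : in_dom x -> 0 <= eta <= 1 -> blk i x y eta ->
  `|(vnorm2 (y i).1 + qnorm2 (y i).2) - 1| <= ((m i - 3)%:R + 4) * (3 * eta).
Proof.
move=> hx he [hv [h1 h2 h3 h4]].
have [cb [c1 c2 c3 c4]] := coord_bound i hx.
rewrite -[X in `|_ - X| <= _](hx i).
have -> : vnorm2 (y i).1 + qnorm2 (y i).2 - (vnorm2 (x i).1 + qnorm2 (x i).2) =
  (vnorm2 (y i).1 - vnorm2 (x i).1) + (qnorm2 (y i).2 - qnorm2 (x i).2) by ring.
rewrite mulrDl; apply: le_trans (ler_normD _ _) _; apply: lerD.
  rewrite /vnorm2 -sumrB; apply: le_trans (ler_norm_sum _ _ _) _.
  rewrite mulr_natl -[X in _ <= _ *+ X]card_ord -sumr_const.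
  apply: ler_sum => j _; rewrite distrC; apply: sq_close; [exact: cb | exact: he | exact: hv].
rewrite /qnorm2.
have s1 := sq_close c1 he h1; have s2 := sq_close c2 he h2;
have s3 := sq_close c3 he h3; have s4 := sq_close c4 he h4.
set A := qre (x i).2 ^+ 2 - qre (y i).2 ^+ 2 in s1.
set B := qi (x i).2 ^+ 2 - qi (y i).2 ^+ 2 in s2.
set C := qj (x i).2 ^+ 2 - qj (y i).2 ^+ 2 in s3.
set D := qk (x i).2 ^+ 2 - qk (y i).2 ^+ 2 in s4.
have -> : qre (y i).2 ^+ 2 + qi (y i).2 ^+ 2 + qj (y i).2 ^+ 2 + qk (y i).2 ^+ 2 -
  (qre (x i).2 ^+ 2 + qi (x i).2 ^+ 2 + qj (x i).2 ^+ 2 + qk (x i).2 ^+ 2) =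
  - (A + B + C + D) by rewrite /A /B /C /D; ring.
rewrite normrN.
apply: le_trans (ler_normD _ _) _.
have := ler_normD (A + B) C; have := ler_normD A B.
lra.
Qed.

End Cl.


Section Cl2.
Variable R : realType.
Variables (k : nat) (m : 'I_k -> nat).
Local Notation dpt := (dpt R m).
Local Notation tpt := (tpt R m).

Definition coords (i : 'I_k) : seq (dpt -> R) :=
  [seq (fun a : dpt => (a i).1 0 j) | j <- enum 'I_(m i - 3)] ++
  [:: (fun a : dpt => qre (a i).2); (fun a : dpt => qi (a i).2);
      (fun a : dpt => qj (a i).2); (fun a : dpt => qk (a i).2)].

Definition allcs (s : seq 'I_k) : seq (dpt -> R) :=
  foldr (fun i acc => coords i ++ acc) [::] s.

Lemma In_allcs c i s : i \in s -> List.In c (coords i) -> List.In c (allcs s).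
Proof.
elim: s => [//|x s IH]; rewrite in_cons => /orP [/eqP ->|hi] hc /=;
  apply: List.in_or_app; [by left | by right; apply: IH].
Qed.

Lemma allcs_In c s : List.In c (allcs s) -> exists i, List.In c (coords i).
Proof.
elim: s => [//|x s IH] /= H; case: (List.in_app_or _ _ _ H) => h; [by exists x | exact: IH].
Qed.

Lemma coords_bound (a : dpt) c i : in_dom a -> List.In c (coords i) -> `|c a| <= 1.
Proof.
move=> ha H; case: (List.in_app_or _ _ _ H) => [/List.in_map_iff [j [<- _]]|h].
  exact: (coord_bound i ha).1.
have [_ [c1 c2 c3 c4]] := coord_bound i ha.
by case: h => [<-|[<-|[<-|[<-|[]]]]].
Qed.

Lemma blk_sym i (x y : dpt) eta : blk i x y eta -> blk i y x eta.
Proof.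
move=> [hv [h1 h2 h3 h4]]; split; first by move=> j; rewrite distrC.
by split; rewrite distrC.
Qed.

Lemma cluster (b : nat -> dpt) : (forall n, in_dom (b n)) ->
  exists c : dpt, in_dom c /\
    forall e, 0 < e -> forall N, exists n, (N <= n)%N /\ ddist2 c (b n) < e.
Proof.
move=> hb.
pose cs := allcs (enum 'I_k).
have [f [finc hf]] := @bw_list R _ b cs (fun c n hc =>
  let: ex_intro i hi := allcs_In hc in coords_bound (hb n) hi).
have exL : forall c : dpt -> R, exists L : R, List.In c cs -> forall e, 0 < e ->
    ev (fun n => `|c (b (f n)) - L| < e).
  move=> c; case: (classic (List.In c cs)) => hc.
    by have [L hL] := hf c hc; exists L.
  by exists 0.
pose Lim c := proj1_sig (constructive_indefinite_description _ (exL c)).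
have hLim : forall c, List.In c cs -> forall e, 0 < e ->
    ev (fun n => `|c (b (f n)) - Lim c| < e).
  by move=> c; exact: (proj2_sig (constructive_indefinite_description _ (exL c))).
pose c0 : dpt := fun i => (\row_j Lim (fun a : dpt => (a i).1 0 j),
  Quat (Lim (fun a : dpt => qre (a i).2)) (Lim (fun a : dpt => qi (a i).2))
       (Lim (fun a : dpt => qj (a i).2)) (Lim (fun a : dpt => qk (a i).2))).
have hin : forall i c, List.In c (coords i) -> List.In c cs.
  by move=> i c; apply: In_allcs; rewrite mem_enum.
have hblk : forall e, 0 < e -> ev (fun n => forall i, blk i (b (f n)) c0 e).
  move=> e e0; apply: ev_all => i.
  have hq : forall c, List.In c (coords i) -> ev (fun n => `|c (b (f n)) - Lim c| <= e).
    move=> c hc; have [N hN] := hLim c (hin _ _ hc) e e0.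
    by exists N => n hn; apply: ltW; apply: hN.
  have hv : ev (fun n => forall j, `|(b (f n) i).1 0 j - (c0 i).1 0 j| <= e).
    apply: ev_all => j; have [N hN] := hq (fun a : dpt => (a i).1 0 j)
      (List.in_or_app _ _ _ (or_introl (List.in_map _ _ _ (In_mem (mem_enum _ j))))).
    by exists N => n hn; rewrite mxE; apply: hN.
  have hc : forall l, (l < 4)%N -> List.In (nth (fun _ => 0) [:: (fun a : dpt => qre (a i).2); (fun a : dpt => qi (a i).2);
      (fun a : dpt => qj (a i).2); (fun a : dpt => qk (a i).2)] l) (coords i).
    move=> l hl; apply: List.in_or_app; right.
    by case: l hl => [|[|[|[|]]]] //= _; tauto.
  have [N1 h1] := hq _ (hc 0%N erefl).
  have [N2 h2] := hq _ (hc 1%N erefl).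
  have [N3 h3] := hq _ (hc 2%N erefl).
  have [N4 h4] := hq _ (hc 3%N erefl).
  have [N5 h5] := hv.
  exists (maxn N1 (maxn N2 (maxn N3 (maxn N4 N5)))) => n hn.
  split; first by apply: h5; lia.
  by split; [apply: h1 | apply: h2 | apply: h3 | apply: h4]; lia.
exists c0; split.
  move=> i; apply/eqP; rewrite -subr_eq0; apply/eqP.
  apply: (@small_zero R _ (((m i - 3)%:R + 4) * 3)).
    by apply: mulr_ge0 => //; apply: addr_ge0.
  move=> eta e0 e1; have [N hN] := hblk eta e0.
  have he : 0 <= eta <= 1 by rewrite (ltW e0) e1.
  have := @blk_val R k m (b (f N)) c0 i eta (hb (f N)) he (hN N (leqnn N) i).
  by rewrite mulrA.
move=> e e0 N.
set C := @Cm R k m.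
pose eta := Num.min 1 (e / (C + 1)).
have C0 : 0 <= C := @Cm_ge0 R k m.
have et0 : 0 < eta by rewrite /eta lt_min ltr01 divr_gt0 //; lra.
have et1 : eta <= 1 by rewrite /eta ge_min lexx.
have et2 : eta <= e / (C + 1) by rewrite /eta ge_min lexx orbT.
have [N0 hN0] := hblk eta et0.
exists (f (maxn N N0)); split.
  apply: leq_trans (incr_ge finc _); exact: leq_maxl.
have hbl : forall i, blk i c0 (b (f (maxn N N0))) eta.
  by move=> i; apply: blk_sym; apply: hN0; exact: leq_maxr.
apply: le_lt_trans (blk_dist hbl) _.
have h1 : eta ^+ 2 <= eta by rewrite expr2; nra.
have h2 : (C + 1) * eta <= e by rewrite mulrC -ler_pdivlMr //; lra.
change (C * eta ^+ 2 < e).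
have h3 : C * eta ^+ 2 <= C * eta by apply: ler_wpM2l.
lra.
Qed.


End Cl2.


Section Q5.
Variable R : realType.
Variables (k : nat) (m : 'I_k -> nat).
Local Notation dpt := (dpt R m).
Local Notation tpt := (tpt R m).

Lemma vtri n (u v w : 'rV[R]_n) :
  vnorm2 (u - w) <= 2 * vnorm2 (u - v) + 2 * vnorm2 (v - w).
Proof.
rewrite /vnorm2 !mulr_sumr -big_split /=; apply: ler_sum => j _; rewrite !mxE.
have := sqr_ge0 (u 0 j - 2 * v 0 j + w 0 j); nra.
Qed.

Lemma qtri (u v w : quat R) :
  qnorm2 (qsub u w) <= 2 * qnorm2 (qsub u v) + 2 * qnorm2 (qsub v w).
Proof.
rewrite /qnorm2 /=.
have h : forall a b c : R, (a - c) ^+ 2 <= 2 * (a - b) ^+ 2 + 2 * (b - c) ^+ 2.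
  move=> a b c; have := sqr_ge0 (a - 2 * b + c); nra.
have := h (qre u) (qre v) (qre w); have := h (qi u) (qi v) (qi w);
have := h (qj u) (qj v) (qj w); have := h (qk u) (qk v) (qk w); lra.
Qed.

Lemma ttri (x y z : tpt) : tdist2 x z <= 2 * tdist2 x y + 2 * tdist2 y z.
Proof.
rewrite /tdist2.
have := qtri x.2 y.2 z.2.
have : \sum_(i < k) vnorm2 (x.1 i - z.1 i) <=
  2 * \sum_(i < k) vnorm2 (x.1 i - y.1 i) + 2 * \sum_(i < k) vnorm2 (y.1 i - z.1 i).
  rewrite !mulr_sumr -big_split /=; apply: ler_sum => i _; exact: vtri.
lra.
Qed.

Lemma tsym (x y : tpt) : tdist2 x y = tdist2 y x.
Proof.
rewrite /tdist2; congr (_ + _).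
  apply: eq_bigr => i _; rewrite /vnorm2; apply: eq_bigr => j _; rewrite !mxE; ring.
rewrite /qnorm2 /=; ring.
Qed.

Lemma tdist2_eq0 (x y : tpt) : tdist2 x y = 0 -> x = y.
Proof.
move=> h.
have v0 : 0 <= \sum_(i < k) vnorm2 (x.1 i - y.1 i) by apply: sumr_ge0 => i _; exact: vnorm2_ge0.
have q0 := qnorm2_ge0 (qsub x.2 y.2).
have hv : \sum_(i < k) vnorm2 (x.1 i - y.1 i) = 0 by move: h; rewrite /tdist2; lra.
have hq : qnorm2 (qsub x.2 y.2) = 0 by move: h; rewrite /tdist2; lra.
rewrite [x]surjective_pairing [y]surjective_pairing; congr pair.
  apply: functional_extensionality_dep => i.
  have := psumr_eq0P (fun i _ => vnorm2_ge0 _) hv (i:=i) isT.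
  by move/vnorm2_eq0/eqP; rewrite subr_eq0 => /eqP.
have := qnorm2_eq0 hq; case: (x.2) => a b c d; case: (y.2) => a' b' c' d' /= [].
move=> /eqP; rewrite subr_eq0 => /eqP ->.
move=> /eqP; rewrite subr_eq0 => /eqP ->.
move=> /eqP; rewrite subr_eq0 => /eqP ->.
by move=> /eqP; rewrite subr_eq0 => /eqP ->.
Qed.

Lemma part5a (U : tpt -> Prop) :
  openin (@in_tgt R k m) (@tdist2 R k m) U ->
  openin (@in_dom R k m) (@ddist2 R k m) (fun a => U (proj a)).
Proof.
move=> hU a ha hUa.
have [e [e0 he]] := hU _ (part1 ha) hUa.
have [d [d0 hd]] := part4 ha e0.
exists d; split => // b hb hab.
apply: he; [exact: part1 | exact: hd].
Qed.

Lemma part5b (surj : forall y : tpt, in_tgt y -> exists a : dpt, in_dom a /\ proj a = y)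
  (U : tpt -> Prop) :
  openin (@in_dom R k m) (@ddist2 R k m) (fun a => U (proj a)) ->
  openin (@in_tgt R k m) (@tdist2 R k m) U.
Proof.
move=> hV y hy hUy.
apply: NNPP => H.
have hb : forall n : nat, exists b : dpt,
    in_dom b /\ tdist2 y (proj b) < (n.+1%:R)^-1 /\ ~ U (proj b).
  move=> n.
  have e0 : 0 < (n.+1%:R : R)^-1 by rewrite invr_gt0 ltr0n.
  have : ~ (forall z, in_tgt z -> tdist2 y z < (n.+1%:R)^-1 -> U z).
    by move=> hz; apply: H; exists (n.+1%:R)^-1.
  move=> /not_all_ex_not [z hz'].
  have [hz hz2] := imply_to_and _ _ hz'.
  have [hdz hnU] := imply_to_and _ _ hz2.
  have [b [hb hpb]] := surj _ hz.
  by exists b; rewrite hpb.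
pose b n := proj1_sig (constructive_indefinite_description _ (hb n)).
have hbP : forall n, in_dom (b n) /\ tdist2 y (proj (b n)) < (n.+1%:R)^-1 /\ ~ U (proj (b n)).
  move=> n; exact: (proj2_sig (constructive_indefinite_description _ (hb n))).
have [c [hc hcl]] := cluster (fun n => (hbP n).1).
have hpc : proj c = y.
  apply: tdist2_eq0; apply/eqP; rewrite eq_le tdist2_ge0 andbT.
  apply/ler_addgt0Pr => e e0; rewrite add0r.
  have e4 : 0 < e / 4 by rewrite divr_gt0.
  have [d [d0 hd]] := part4 hc e4.
  pose N := Num.Def.archi_bound (e / 4)^-1.
  have hN : (e / 4)^-1 < N%:R by apply: archi_boundP; rewrite invr_ge0 ltW.
  have [n [hn hdn]] := hcl d d0 N.
  have h1 := hd _ (hbP n).1 hdn.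
  have h2 := (hbP n).2.1.
  have h3 : (n.+1%:R : R)^-1 <= e / 4.
    rewrite -[e / 4]invrK lef_pV2 ?posrE ?ltr0n ?invr_gt0 //.
    apply: le_trans (ltW hN) _; rewrite ler_nat; lia.
  have := ttri (proj c) (proj (b n)) y; rewrite (tsym (proj (b n)) y).
  have eq4 : e = 4 * (e / 4) by field.
  move: h1 h2 h3 eq4; set q := e / 4 => h1 h2 h3 eq4; have h23 := lt_le_trans h2 h3; lra.
have hUc : U (proj c) by rewrite hpc.
have [e0 [e00 he0]] := hV c hc hUc.
have [n [_ hn]] := hcl e0 e00 0%N.
exact: (hbP n).2.2 (he0 _ (hbP n).1 hn).
Qed.

End Q5.

Unset Implicit Arguments.
Theorem theorem3 (R : realType) (k : nat) (m : 'I_k -> nat)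
  (hk : (2 <= k)%N) (hm : forall i, (4 <= m i)%N) :
  (* proj maps S^{m_1} x ... x S^{m_k} into S^m ... *)
  (forall a : dpt R m, in_dom a -> in_tgt (proj a)) /\
  (* ... onto S^m ... *)
  (forall y : tpt R m, in_tgt y -> exists a, in_dom a /\ proj a = y) /\
  (* ... its fibres are exactly the Sp(1)^{k-1}-orbits ... *)
  (forall a b : dpt R m, in_dom a -> in_dom b ->
     (proj a = proj b <-> same_orbit a b)) /\
  (* ... it is continuous ... *)
  (forall a : dpt R m, in_dom a -> forall e : R, 0 < e ->
     exists d : R, 0 < d /\ forall b, in_dom b -> ddist2 a b < d ->
       tdist2 (proj a) (proj b) < e) /\
  (* ... and it is a quotient map, so it induces a homeomorphism
     (S^{m_1} x ... x S^{m_k}) / Sp(1)^{k-1} ~= S^m *)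
  (forall U : tpt R m -> Prop,
     openin (@in_tgt R k m) (@tdist2 R k m) U <->
     openin (@in_dom R k m) (@ddist2 R k m) (fun a => U (proj a))).
Proof.
case: k m hk hm => [//|n] m hk hm.
have hs : forall y : tpt R m, in_tgt y -> exists a, in_dom a /\ proj a = y.
  exact: part2.
split; first exact: part1.
split; first exact: hs.
split.
  move=> a b ha hb; split; [exact: proj_orbit | exact: orbit_proj].
split; first exact: part4.
move=> U; split; [exact: part5a | exact: part5b].
Qed.
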